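(* Let $n$ be a positive integer, $1\le k\le n+1$, and let $F_k$ be a (directed or undirected) $k$-profile on $[n]\cup\{0,n+1\}$. Then: (1) there are positions $q_1,q_n$ such that in every permutation of $[n]\cup\{0,n+1\}$ whose (directed, resp. undirected) $k$-profile is $F_k$, the element $1$ is at position $q_1$ and the element $n$ is at position $q_n$; (2) with $l=\min\{q_1,q_n\}$ and $r=\max\{q_1,q_n\}$, the sets $X$, $Y$, $Z$ of elements located strictly between positions $0$ and $l$, strictly between positions $l$ and $r$, and strictly between positions $r$ and $n+1$, respectively, are the same for all permutations whose $k$-profile is $F_k$.
   Context: $[n]=\{1,\dots,n\}$. Permutations are of $[n]\cup\{0,n+1\}$, positions numbered $0,\dots,n+1$, always with $0$ at position $0$ and $n+1$ at position $n+1$. For a permutation $P$ and elements $t<t+i$, let $\min_{t,t+i}$ and $\max_{t,t+i}$ be the minimum and maximum of the elements located on $P$ in the interval delimited by the element $t$ (included) and the element $t+i$ (included). The $k$-profile of $P$ is the set $\{(t,t+i,[\min_{t,t+i},\max_{t,t+i}]) : 1\le i\le k,\ 0\le t\le n+1-i\}$; the directed $k$-profile additionally records, for each such pair, whether $t$ is left or right of $t+i$ in $P$. A ($k$-)profile $F_k$ is any set of constraints of this form (for general integers in place of the min and max); the claim concerns all permutations whose $k$-profile equals $F_k$ (possibly none). *)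

(* Defs.v *)
From mathcomp Require Import all_boot all_fingroup.
Set Implicit Arguments. Unset Strict Implicit. Unset Printing Implicit Defensive.

(* A permutation P of {0,...,n+1} is a bijection positions -> elements
   (positions 0..n+1), with P 0 = 0 and P (n+1) = n+1. *)
Definition valid_perm (n : nat) (P : {perm 'I_n.+2}) : Prop :=
  P ord0 = ord0 /\ P ord_max = ord_max.

Definition elem (n : nat) (P : {perm 'I_n.+2}) (j : nat) : nat :=
  val (P (inord j)).

Definition pos (n : nat) (P : {perm 'I_n.+2}) (t : nat) : nat :=
  val ((P^-1)%g (inord t)).

Definition wmin (n : nat) (P : {perm 'I_n.+2}) (t u : nat) : nat :=
  \big[minn/n.+1]_(minn (pos P t) (pos P u) <= j < (maxn (pos P t) (pos P u)).+1)
     elem P j.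
Definition wmax (n : nat) (P : {perm 'I_n.+2}) (t u : nat) : nat :=
  \max_(minn (pos P t) (pos P u) <= j < (maxn (pos P t) (pos P u)).+1)
     elem P j.

(* A (directed if d = true, undirected if d = false) profile entry:
   (t, t+i, (min, max), direction), where direction is
   Some (t is left of t+i) in the directed case and None otherwise. *)
Definition entry := (nat * nat * (nat * nat) * option bool)%type.

Definition kprofile (d : bool) (n k : nat) (P : {perm 'I_n.+2}) : pred entry :=
  fun x => let '(t, u, (mn, mx), o) := x in
    [&& t < u, u - t <= k, u <= n.+1,
        mn == wmin P t u, mx == wmax P t u &
        o == (if d then Some (pos P t < pos P u) else None)].

Definition between (n : nat) (P : {perm 'I_n.+2}) (a b : nat) : seq nat :=
  [seq elem P j | j <- iota a.+1 (b - a.+1)].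

(* Main.v *)
Require Import Defs.
From mathcomp Require Import all_boot all_fingroup.
From mathcomp Require Import zify.
From Stdlib Require Import Classical.
Set Implicit Arguments. Unset Strict Implicit. Unset Printing Implicit Defensive.



Section S.
Variables (n : nat) (P : {perm 'I_n.+2}).

Lemma pos_lt t : pos P t < n.+2.
Proof. exact: ltn_ord. Qed.

Lemma elem_pos t : t < n.+2 -> elem P (pos P t) = t.
Proof. by move=> ht; rewrite /elem /pos inord_val permKV; apply: inordK. Qed.

Lemma pos_elem j : j < n.+2 -> pos P (elem P j) = j.
Proof. by move=> ht; rewrite /elem /pos inord_val permK; apply: inordK. Qed.

Lemma pos_inj t u : t < n.+2 -> u < n.+2 -> pos P t = pos P u -> t = u.
Proof. by move=> ht hu e; rewrite -(elem_pos ht) -(elem_pos hu) e. Qed.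

Lemma pos_eq t u : t < n.+2 -> u < n.+2 -> (pos P t == pos P u) = (t == u).
Proof. by move=> ht hu; apply/eqP/eqP => [|->]; [apply: pos_inj|]. Qed.

Hypothesis V : valid_perm P.

Lemma pos0 : pos P 0 = 0.
Proof.
case: V => h0 _; rewrite /pos (_ : inord 0 = ord0); last by apply/val_inj; rewrite /= inordK.
by rewrite -{1}h0 permK.
Qed.

Lemma posN : pos P n.+1 = n.+1.
Proof.
case: V => _ h1; rewrite /pos (_ : inord n.+1 = ord_max); last by apply/val_inj; rewrite /= inordK.
by rewrite -{1}h1 permK.
Qed.

End S.

Lemma flip_ar a b p : a != p -> b != p ->
  (a < p) = (b < p) (+) ((minn a b <= p) && (p <= maxn a b)).
Proof.
move=> /eqP ha /eqP hb.
case: (ltnP a p) => h1; case: (ltnP b p) => h2; case: (leqP a b) => h3.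
all: try (rewrite (minn_idPl h3) (maxn_idPr h3)).
all: try (rewrite (minn_idPr (ltnW h3)) (maxn_idPl (ltnW h3))).
all: apply/eqP; rewrite ?eqb_id; lia.
Qed.



Lemma bigmin_le1 (N : nat) (f : nat -> nat) (s : seq nat) : 1 < N ->
  (\big[minn/N]_(j <- s) f j <= 1) = has (fun j => f j <= 1) s.
Proof.
move=> hN; elim: s => [|j s IH]; first by rewrite big_nil /= leqNgt hN.
by rewrite big_cons geq_min IH.
Qed.

Lemma bigmax_geq (c : nat) (f : nat -> nat) (s : seq nat) : 0 < c ->
  (c <= \max_(j <- s) f j) = has (fun j => c <= f j) s.
Proof.
move=> hc; elim: s => [|j s IH]; first by rewrite big_nil /= leqNgt hc.
by rewrite big_cons leq_max IH.
Qed.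

Section W.
Variables (n : nat) (P : {perm 'I_n.+2}).
Hypothesis V : valid_perm P.

Lemma pos_eq0 t : t < n.+2 -> (pos P t == 0) = (t == 0).
Proof. by move=> ht; rewrite -{1}(pos0 V) pos_eq. Qed.

Lemma pos_eqN t : t < n.+2 -> (pos P t == n.+1) = (t == n.+1).
Proof. by move=> ht; rewrite -{1}(posN V) pos_eq. Qed.

Lemma wmin_le1 t : 2 <= t -> t <= n ->
  (wmin P t t.+1 <= 1) =
  (minn (pos P t) (pos P t.+1) <= pos P 1) && (pos P 1 <= maxn (pos P t) (pos P t.+1)).
Proof.
move=> h2 hn; rewrite /wmin bigmin_le1; last by lia.
have : pos P t != 0 by rewrite pos_eq0 //; lia.
have : pos P t.+1 != 0 by rewrite pos_eq0 //; lia.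
have := pos_lt P t; have := pos_lt P t.+1.
move: (pos P t) (pos P t.+1) => a b ha hb na nb.
apply/hasP/idP.
- move=> [j]; rewrite mem_index_iota => /andP[lj jh] ej.
  have jn : j < n.+2 by lia.
  have hp := pos_elem P jn.
  move: ej hp; case: (elem P j) => [|[|m]] //= _ hp.
    by rewrite (pos0 V) in hp; lia.
  by rewrite hp; apply/andP; lia.
- move=> /andP[h3 h4]; exists (pos P 1); first by rewrite mem_index_iota; lia.
  by rewrite elem_pos.
Qed.

Lemma wmax_geqn t : t.+2 <= n ->
  (n <= wmax P t t.+1) =
  (minn (pos P t) (pos P t.+1) <= pos P n) && (pos P n <= maxn (pos P t) (pos P t.+1)).
Proof.
move=> hn; rewrite /wmax bigmax_geq; last by lia.
have : pos P t != n.+1 by rewrite pos_eqN //; lia.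
have : pos P t.+1 != n.+1 by rewrite pos_eqN //; lia.
have := pos_lt P t; have := pos_lt P t.+1.
move: (pos P t) (pos P t.+1) => a b ha hb na nb.
apply/hasP/idP.
- move=> [j]; rewrite mem_index_iota => /andP[lj jh] ej.
  have jn : j < n.+2 by lia.
  have hp := pos_elem P jn.
  have el := pos_lt (P^-1)%g j.
  have e2 : elem P j < n.+2 by exact: ltn_ord.
  have [e3|e3] : elem P j = n \/ elem P j = n.+1 by lia.
    by rewrite e3 in hp; rewrite hp; apply/andP; lia.
  by rewrite e3 (posN V) in hp; lia.
- move=> /andP[h3 h4]; exists (pos P n); first by rewrite mem_index_iota; lia.
  by rewrite elem_pos.
Qed.

Lemma flip1 t : 2 <= t -> t <= n ->
  (pos P t < pos P 1) = (pos P t.+1 < pos P 1) (+) (wmin P t t.+1 <= 1).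
Proof.
move=> h2 hn; rewrite wmin_le1 //; apply: flip_ar; rewrite pos_eq //; lia.
Qed.

Lemma flipn t : t.+2 <= n ->
  (pos P t.+1 < pos P n) = (pos P t < pos P n) (+) (n <= wmax P t t.+1).
Proof.
move=> hn; rewrite wmax_geqn // minnC maxnC; apply: flip_ar; rewrite pos_eq //; lia.
Qed.

End W.



Lemma prof_eq d n k (F : pred entry) (P P' : {perm 'I_n.+2}) t : 0 < k -> t < n.+1 ->
  kprofile d k P =i F -> kprofile d k P' =i F ->
  wmin P t t.+1 = wmin P' t t.+1 /\ wmax P t t.+1 = wmax P' t t.+1.
Proof.
move=> hk ht HP HP'.
set e : entry := (t, t.+1, (wmin P t t.+1, wmax P t t.+1),
                  if d then Some (pos P t < pos P t.+1) else None).
have : e \in kprofile d k P.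
  by rewrite unfold_in /e; lazy beta iota; rewrite ltnSn subSnn hk ht !eqxx.
rewrite HP -HP' unfold_in /e; lazy beta iota.
by move=> /and5P[_ _ _ /eqP <- /andP[/eqP <- _]].
Qed.

Section I.
Variables (d : bool) (n k : nat) (F : pred entry) (P P' : {perm 'I_n.+2}).
Hypotheses (n0 : 0 < n) (k0 : 0 < k) (V : valid_perm P) (V' : valid_perm P')
  (HP : kprofile d k P =i F) (HP' : kprofile d k P' =i F).

Lemma L1inv t : t < n.+2 -> (pos P t < pos P 1) = (pos P' t < pos P' 1).
Proof.
move=> ht.
have p1 : forall Q : {perm 'I_n.+2}, valid_perm Q -> 0 < pos Q 1.
  by move=> Q VQ; rewrite lt0n pos_eq0 //; lia.
case: t ht => [|[|t]] ht; first by rewrite !pos0 // !p1.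
  by rewrite !ltnn.
have main : forall m t, t + m = n.+1 -> 2 <= t ->
   (pos P t < pos P 1) = (pos P' t < pos P' 1).
  elim => [|m IH] t0 e h2.
    rewrite addn0 in e; rewrite e !posN //.
    have g1 := pos_lt P 1; have g2 := pos_lt P' 1; rewrite ltnS in g1; rewrite ltnS in g2.
    by rewrite !ltnNge g1 g2.
  have h3 : t0 <= n by lia.
  rewrite (flip1 V) // (flip1 V') // (IH t0.+1) ?addSnnS //; last by lia.
  by case: (@prof_eq d n k F P P' t0 k0 _ HP HP') => [|-> _] //; lia.
by apply: (main (n.+1 - t.+2)); lia.
Qed.

Lemma Lninv t : t < n.+2 -> (pos P t < pos P n) = (pos P' t < pos P' n).
Proof.
move=> ht.
have main : forall t, t.+1 <= n -> (pos P t < pos P n) = (pos P' t < pos P' n).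
  elim => [|t0 IH] h.
    have p1 : forall Q : {perm 'I_n.+2}, valid_perm Q -> 0 < pos Q n.
      by move=> Q VQ; rewrite lt0n pos_eq0 //; lia.
    by rewrite !pos0 // !p1.
  rewrite (flipn V) // (flipn V') // IH; last by lia.
  by case: (@prof_eq d n k F P P' t0 k0 _ HP HP') => [|_ ->] //; lia.
case: (ltnP t n) => h; first exact: main.
have [->|->] : t = n \/ t = n.+1 by lia.
  by rewrite !ltnn.
have h1 := pos_lt P n; have h2 := pos_lt P' n; rewrite ltnS in h1; rewrite ltnS in h2.
by rewrite !posN // !ltnNge h1 h2.
Qed.

End I.



Lemma sumlt m p : \sum_(t < m) (t < p) = minn m p.
Proof.
elim: m => [|m IH]; first by rewrite big_ord0 min0n.
rewrite big_ord_recr /= IH; case: (ltnP m p) => h /=; lia.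
Qed.

Lemma pos_count n (Q : {perm 'I_n.+2}) p : p <= n.+2 ->
  \sum_(t < n.+2) (pos Q t < p) = p.
Proof.
move=> hp.
rewrite (reindex_inj (@perm_inj _ Q)) /=.
rewrite (eq_bigr (fun t : 'I_n.+2 => ((t < p) : nat))) ?sumlt; first by lia.
by move=> i _; rewrite /pos inord_val permK.
Qed.

Lemma ar1 (a b j : nat) : a < j -> j < a.+1 + (b - a.+1) -> j < b.
Proof. lia. Qed.

Lemma mem_between n (Q : {perm 'I_n.+2}) a b x : b <= n.+1 ->
  (x \in between Q a b) = (x < n.+2) && (a < pos Q x < b).
Proof.
move=> hb; apply/mapP/idP.
- move=> [j]; rewrite mem_iota => /andP[aj jb] ->.
  have jb' := ar1 aj jb.
  have jn : j < n.+2 by rewrite ltnS (leq_trans (ltnW jb') hb).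
  by rewrite pos_elem // ltn_ord aj jb'.
- move=> /andP[xl /andP[ax xb]]; exists (pos Q x); last by rewrite elem_pos.
  have hab : a.+1 <= b by exact: leq_trans ax (ltnW xb).
  by rewrite mem_iota ax /= (subnKC hab).
Qed.

Lemma cmp_same y y' c : (y < c) = (y' < c) -> (y == c) = (y' == c) -> (c < y) = (c < y').
Proof. by move=> h1 h2; rewrite ltnNge [c < y']ltnNge (leq_eqVlt y) (leq_eqVlt y') h1 h2. Qed.

Lemma ltN n (y : nat) : y < n.+2 -> (y < n.+1) = (y != n.+1).
Proof. by move=> h; have h' : y <= n.+1 := h; rewrite ltn_neqAle h' andbT. Qed.

Theorem claim8 (d : bool) (n k : nat) (F : pred entry) :
  0 < n -> 1 <= k <= n.+1 ->
  exists q1 qn : nat,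
    q1 <= n.+1 /\ qn <= n.+1 /\
    (forall P : {perm 'I_n.+2}, valid_perm P -> kprofile d k P =i F ->
       elem P q1 = 1 /\ elem P qn = n) /\
    (forall P P' : {perm 'I_n.+2},
       valid_perm P -> kprofile d k P =i F ->
       valid_perm P' -> kprofile d k P' =i F ->
       between P 0 (minn q1 qn) =i between P' 0 (minn q1 qn) /\
       between P (minn q1 qn) (maxn q1 qn) =i between P' (minn q1 qn) (maxn q1 qn) /\
       between P (maxn q1 qn) n.+1 =i between P' (maxn q1 qn) n.+1).
Proof.
move=> n0 /andP[k1 kn].
case: (classic (exists P0 : {perm 'I_n.+2}, valid_perm P0 /\ kprofile d k P0 =i F))
  => [[P0 [V0 H0]]|none]; last first.
  exists 0, 0; split; first exact: leq0n.
  split; first exact: leq0n.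
  split => [P VP HP|P P' VP HP]; exfalso; apply: none; by exists P.
have q1e : forall P : {perm 'I_n.+2}, valid_perm P -> kprofile d k P =i F -> pos P 1 = pos P0 1.
  move=> P VP HP.
  rewrite -(pos_count P (ltnW (pos_lt P 1))) -(pos_count P0 (ltnW (pos_lt P0 1))).
  by apply: eq_bigr => t _; rewrite (L1inv n0 k1 VP V0 HP H0 (ltn_ord t)).
have qne : forall P : {perm 'I_n.+2}, valid_perm P -> kprofile d k P =i F -> pos P n = pos P0 n.
  move=> P VP HP.
  rewrite -(pos_count P (ltnW (pos_lt P n))) -(pos_count P0 (ltnW (pos_lt P0 n))).
  by apply: eq_bigr => t _; rewrite (Lninv n0 k1 VP V0 HP H0 (ltn_ord t)).
exists (pos P0 1), (pos P0 n).
split; first exact: pos_lt.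
split; first exact: pos_lt.
split.
  move=> P VP HP; rewrite -(q1e P VP HP) -(qne P VP HP) !elem_pos //; lia.
move=> P P' VP HP VP' HP'.
have q1n : pos P0 1 <= n.+1 by exact: pos_lt.
have qnn : pos P0 n <= n.+1 by exact: pos_lt.
have facts : forall x, x < n.+2 ->
  [/\ (pos P x < pos P0 1) = (pos P' x < pos P0 1),
      (pos P x == pos P0 1) = (pos P' x == pos P0 1),
      (pos P x < pos P0 n) = (pos P' x < pos P0 n),
      (pos P x == pos P0 n) = (pos P' x == pos P0 n) &
   [/\ (pos P x < 0) = (pos P' x < 0),
      (pos P x == 0) = (pos P' x == 0),
      (pos P x < n.+1) = (pos P' x < n.+1) &
      (pos P x == n.+1) = (pos P' x == n.+1)]].
  move=> x xl.
  rewrite -{1 3}(q1e P VP HP) -(q1e P' VP' HP') -{1 3}(qne P VP HP) -(qne P' VP' HP').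
  have h1 : 1 < n.+2 by [].
  have hn : n < n.+2 by exact: leqnSn n.+1.
  split.
  - exact: (L1inv n0 k1 VP VP' HP HP' xl).
  - by rewrite (pos_eq P xl h1) (pos_eq P' xl h1).
  - exact: (Lninv n0 k1 VP VP' HP HP' xl).
  - by rewrite (pos_eq P xl hn) (pos_eq P' xl hn).
  split.
  - by rewrite !ltn0.
  - by rewrite (pos_eq0 VP xl) (pos_eq0 VP' xl).
  - by rewrite (ltN (pos_lt P x)) (ltN (pos_lt P' x)) (pos_eqN VP xl) (pos_eqN VP' xl).
  - by rewrite (pos_eqN VP xl) (pos_eqN VP' xl).
have hmin : minn (pos P0 1) (pos P0 n) <= n.+1 by rewrite geq_min q1n.
have hmax : maxn (pos P0 1) (pos P0 n) <= n.+1 by rewrite geq_max q1n qnn.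
split; [|split] => x; rewrite !mem_between //; case xl: (x < n.+2); rewrite ?andTb ?andFb //;
  case: (facts x xl) => c1 d1 cn dn [c0 d0 cN dN];
  (case: (leqP (pos P0 1) (pos P0 n)) => hq;
   [rewrite ?(minn_idPl hq) ?(maxn_idPr hq) | rewrite ?(minn_idPr (ltnW hq)) ?(maxn_idPl (ltnW hq))]);
  by rewrite ?(cmp_same c0 d0) ?(cmp_same c1 d1) ?(cmp_same cn dn) ?c1 ?cn ?cN.
Qed.
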